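(* Let $n,m\in\mathbb{Z}$ be such that $k:=\gcd(n,m)$ satisfies $|k|\ge2$. Then the group $\langle a,b\mid (ab)^n=(ba)^m\rangle$ is big.
   Context: A group is called big if it contains a non-abelian free subgroup. *)

(* Defs.v *)
(* Finitely presented groups are modelled concretely:
   the group < a, b | r > is the set of words in the letters a^{+-1}, b^{+-1}
   modulo the congruence generated by free cancellation and the relator r. *)
From mathcomp Require Import all_boot all_order all_algebra.
From Stdlib Require Lists.List.
Set Implicit Arguments. Unset Strict Implicit. Unset Printing Implicit Defensive.
Import Order.TTheory GRing.Theory Num.Theory.

(* A letter over an alphabet I: (generator, inverted?) ; true = inverse. *)
Definition letter (I : Type) := (I * bool)%type.
Definition word (I : Type) := seq (letter I).

Definition linv (I : Type) (l : letter I) : letter I := (l.1, ~~ l.2).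
Definition winv (I : Type) (w : word I) : word I := rev (map (@linv I) w).

Definition wpow (I : Type) (w : word I) (z : int) : word I :=
  match z with
  | Posz k => flatten (nseq k w)
  | Negz k => flatten (nseq k.+1 (winv w))
  end.

Inductive pres_eq (I : Type) (rels : seq (word I)) : word I -> word I -> Prop :=
| pe_refl w : pres_eq rels w w
| pe_sym u v : pres_eq rels u v -> pres_eq rels v u
| pe_trans u v w : pres_eq rels u v -> pres_eq rels v w -> pres_eq rels u w
| pe_cancel u v (l : letter I) : pres_eq rels (u ++ [:: l; linv l] ++ v) (u ++ v)
| pe_rel u v r : Stdlib.Lists.List.In r rels -> pres_eq rels (u ++ r ++ v) (u ++ v).

Fixpoint reduced (J : Type) (w : word J) : Prop :=
  match w with
  | x :: ((y :: _) as t) => ~ (x.1 = y.1 /\ x.2 = ~~ y.2) /\ reduced t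
  | _ => True
  end.

Definition wsubst (I J : Type) (x : J -> word I) (w : word J) : word I :=
  flatten (map (fun l : letter J => if l.2 then winv (x l.1) else x l.1) w).

Definition free_family (I J : Type) (rels : seq (word I)) (x : J -> word I) : Prop :=
  forall w : word J, w <> [::] -> reduced w -> ~ pres_eq rels (wsubst x w) [::].

(* The group <I | rels> is big: it contains a non-abelian free subgroup,
   i.e. a subgroup free on a basis with at least two elements. *)
Definition big_presented (I : Type) (rels : seq (word I)) : Prop :=
  exists (J : Type) (x : J -> word I) (j1 j2 : J),
    j1 <> j2 /\ free_family rels x.

(* Generators a (= false) and b (= true) and the relator (ab)^n (ba)^{-m}. *)
Definition ga : letter bool := (false, false).
Definition gb : letter bool := (true, false).
Definition relator_nm (n m : int) : word bool :=
  wpow [:: ga; gb] n ++ winv (wpow [:: gb; ga] m).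

(* Main.v *)
Require Import Defs.
From mathcomp Require Import all_boot all_order all_algebra.
From mathcomp Require Import zify.
Import Order.TTheory GRing.Theory Num.Theory.
Local Open Scope ring_scope.

Section Act.
Variable k : nat.
Hypothesis hk : (1 < k)%N.

Definition nrm (b : bool) (i : int) : int := if b then (i %% (k%:Z))%Z else i.

Lemma nrmD b x y : nrm b (nrm b x + y) = nrm b (x + y).
Proof. by case: b => //=; rewrite modzDml. Qed.

Lemma nrm_id b x : nrm b (nrm b x) = nrm b x.
Proof. by have := nrmD b x 0; rewrite !addr0. Qed.

Definition nf := seq (bool * int).

Definition ins (b : bool) (e : int) (s : nf) : nf :=
  if nrm b e == 0 then s else (b, nrm b e) :: s.

Definition mulg (b : bool) (e : int) (s : nf) : nf :=
  match s with
  | (b', i) :: r => if b' == b then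
       (if nrm b (i + e) == 0 then r else (b, nrm b (i + e)) :: r)
     else ins b e s
  | [::] => ins b e s
  end.

Definition hdb (s : nf) : option bool := if s is (b, _) :: _ then Some b else None.

Fixpoint wf (s : nf) : bool :=
  match s with
  | [::] => true
  | (b, i) :: r => [&& nrm b i == i, i != 0, wf r & hdb r != Some b]
  end.

Lemma mulg_ins b e s : hdb s != Some b -> mulg b e s = ins b e s.
Proof.
case: s => [|[b' i] r] //= H.
have -> : (b' == b) = false by apply/eqP => Hb; move: H; rewrite Hb eqxx.
by [].
Qed.

Lemma wf_ins b e s : wf s -> hdb s != Some b -> wf (ins b e s).
Proof.
rewrite /ins => Hs Hh; case: eqP => //= /eqP H.
by rewrite nrm_id eqxx H Hs Hh.
Qed.

Lemma wf_mulg b e s : wf s -> wf (mulg b e s).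
Proof.
case: s => [|[b' i] r] /=; first by move=> _; apply: wf_ins.
case/and4P => Hn Hi Hr Hh.
case: eqP => [Hb|Hb]; [subst b'|].
  by case: eqP => //= /eqP ->; rewrite nrm_id eqxx Hr Hh.
apply: wf_ins => /=; first by rewrite Hn Hi Hr Hh.
by apply/eqP => -[].
Qed.

Lemma mulg_comp b e e' s : wf s -> mulg b e (mulg b e' s) = mulg b (e' + e) s.
Proof.
have Hins : forall s, hdb s != Some b -> mulg b e (ins b e' s) = ins b (e' + e) s.
  move=> t Ht; rewrite /ins; case: eqP => [H0|H0].
    by rewrite mulg_ins // /ins -(nrmD b e' e) H0 add0r.
  by rewrite /= eqxx nrmD.
case: s => [|[b' i] r] /=; first by move=> _; apply: Hins.
case/and4P => Hn Hi Hr Hh.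
case: eqP => [Hb|Hb]; [subst b'|]; last by apply: Hins => /=; apply/eqP => -[].
case: eqP => [H0|H0].
  rewrite mulg_ins // /ins.
  by rewrite addrA -(nrmD b (i + e') e) H0 add0r.
by rewrite /= eqxx nrmD addrA.
Qed.

Lemma mulg_id b e s : wf s -> nrm b e = 0 -> mulg b e s = s.
Proof.
move=> Hs He.
have Hx : forall x, nrm b (x + e) = nrm b x.
  by move=> x; rewrite addrC -nrmD He add0r.
case: s Hs => [|[b' i] r] /=; first by rewrite /ins He eqxx.
case/and4P => Hn Hi Hr Hh.
case: eqP => [Hb|Hb]; last by rewrite /ins He eqxx.
by subst b'; rewrite Hx (eqP Hn) (negbTE Hi).
Qed.

Lemma nrm0 b : nrm b 0 = 0.
Proof. by case: b => //=; rewrite mod0z. Qed.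


Notation mA := (mulg false).
Notation mC := (mulg true).

Definition actl (l : letter bool) (s : nf) : nf :=
  match l with
  | (false, false) => mA 1 s
  | (false, true) => mA (-1) s
  | (true, false) => mA (-1) (mC 1 s)
  | (true, true) => mC (-1) (mA 1 s)
  end.

Definition act (w : word bool) (s : nf) : nf := foldr actl s w.

Lemma act_cat u v s : act (u ++ v) s = act u (act v s).
Proof. by rewrite /act foldr_cat. Qed.

Lemma wf_actl l s : wf s -> wf (actl l s).
Proof. by case: l => [[] []] /= H; rewrite ?wf_mulg. Qed.

Lemma wf_act w s : wf s -> wf (act w s).
Proof. by elim: w => //= l w IH H; apply: wf_actl; apply: IH. Qed.

Lemma mA0 s : wf s -> mA 0 s = s.
Proof. by move=> H; apply: mulg_id. Qed.
Lemma mC0 s : wf s -> mC 0 s = s.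
Proof. by move=> H; apply: mulg_id => //; apply: (nrm0 true). Qed.

Ltac simp := repeat (rewrite ?mulg_comp ?wf_mulg //); rewrite ?subrr ?addrN ?addNr ?mA0 ?mC0 ?wf_mulg //.

Lemma mulgK b e s : wf s -> mulg b e (mulg b (- e) s) = s.
Proof. by move=> H; rewrite mulg_comp // addNr mulg_id // nrm0. Qed.
Lemma mulgNK b e s : wf s -> mulg b (- e) (mulg b e s) = s.
Proof. by move=> H; rewrite mulg_comp // addrN mulg_id // nrm0. Qed.

Lemma actl_cancel l s : wf s -> actl l (actl (linv l) s) = s.
Proof.
move=> H; case: l => [[] []] /=.
- by rewrite (mulgK false 1) ?wf_mulg // (mulgNK true 1).
- by rewrite (mulgK true 1) ?wf_mulg // (mulgNK false 1).
- by rewrite (mulgNK false 1).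
- by rewrite (mulgK false 1).
Qed.

Lemma act_winv w s : wf s -> act (winv w) (act w s) = s.
Proof.
elim: w s => // l w IH s Hs.
have Hw : winv (l :: w) = winv w ++ [:: linv l].
  by rewrite /winv /= rev_cons -cats1.
have Hl : linv (linv l) = l by rewrite /linv /= negbK; case: (l).
have H := actl_cancel (linv l) _ (wf_act w s Hs); rewrite Hl in H.
rewrite Hw act_cat.
change (act (winv w) (actl (linv l) (actl l (act w s))) = s).
by rewrite H IH.
Qed.

Lemma act_iter q w s : act (flatten (nseq q w)) s = iter q (act w) s.
Proof. by elim: q => //= q IH; rewrite act_cat IH. Qed.


Lemma iterC w e q s : (forall t, wf t -> act w t = mC e t) -> wf s ->
  iter q (act w) s = mC (e * q%:Z) s.
Proof.
move=> Hw Hs; elim: q => [|q IH] /=; first by rewrite mulr0 mulg_id // nrm0.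
rewrite IH Hw ?wf_mulg // mulg_comp // intS mulrDr mulr1 addrC.
by [].
Qed.

Lemma iterCA w e q s : (forall t, wf t -> act w t = mA (-1) (mC e (mA 1 t))) -> wf s ->
  iter q (act w) s = mA (-1) (mC (e * q%:Z) (mA 1 s)).
Proof.
move=> Hw Hs; elim: q => [|q IH] /=.
  by rewrite mulr0 (mulg_id true) ?wf_mulg ?nrm0 // (mulgNK false 1).
rewrite IH Hw ?wf_mulg // (mulgK false 1) ?wf_mulg // mulg_comp ?wf_mulg //.
by rewrite intS mulrDr mulr1 addrC.
Qed.

Lemma act_pow_ab n s : wf s -> act (wpow [:: ga; gb] n) s = mC n s.
Proof.
move=> Hs; case: n => p; rewrite /wpow act_iter.
  rewrite (iterC _ (1)) ?mul1r // => t Ht /=.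
  by rewrite (mulgK false 1) ?wf_mulg.
rewrite (iterC _ (-1)) ?NegzE ?mulN1r // => t Ht /=.
by rewrite (mulgK false 1).
Qed.

Lemma act_pow_ba m s : wf s -> act (wpow [:: gb; ga] m) s = mA (-1) (mC m (mA 1 s)).
Proof.
move=> Hs; case: m => p; rewrite /wpow act_iter.
  by rewrite (iterCA _ (1)) ?mul1r.
by rewrite (iterCA _ (-1)) ?NegzE ?mulN1r.
Qed.

Lemma act_rel n m t : (k%:Z %| n)%Z -> (k%:Z %| m)%Z -> wf t ->
  act (relator_nm n m) t = t.
Proof.
move=> Hn Hm Ht.
have Hn0 : nrm true n = 0 by apply/dvdz_mod0P.
have Hm0 : nrm true (- m) = 0 by apply/dvdz_mod0P; rewrite rpredN.
set t'' := mA (-1) (mC (- m) (mA 1 t)).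
have Wt : wf t'' by rewrite /t'' !wf_mulg.
have E : act (wpow [:: gb; ga] m) t'' = t.
  rewrite act_pow_ba // /t'' (mulgK false 1) ?wf_mulg // mulg_comp ?wf_mulg //.
  by rewrite addNr (mulg_id true) ?wf_mulg ?nrm0 // (mulgNK false 1).
rewrite /relator_nm act_cat -{1}E act_winv // act_pow_ab // mulg_id //.
by rewrite /t'' (mulg_id true) ?wf_mulg // (mulgNK false 1).
Qed.


Lemma pres_act n m u v : (k%:Z %| n)%Z -> (k%:Z %| m)%Z ->
  pres_eq [:: relator_nm n m] u v -> forall t, wf t -> act u t = act v t.
Proof.
move=> Hn Hm; elim => //=.
- by move=> u' v' _ IH t Ht; rewrite IH.
- by move=> u' v' w' _ IH1 _ IH2 t Ht; rewrite IH1 // IH2.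
- move=> u' v' l t Ht; rewrite !act_cat.
  change (act u' (actl l (actl (linv l) (act v' t))) = act u' (act v' t)).
  by rewrite actl_cancel // wf_act.
- move=> u' v' r [<-|[]] t Ht; rewrite act_cat [act (relator_nm _ _ ++ _) _]act_cat act_rel ?act_cat //.
  exact: wf_act.
Qed.

Lemma nrm1 : nrm true 1 = 1.
Proof. by rewrite /= modz_small //; apply/andP; split => //; rewrite ltz_nat. Qed.

Lemma nrmN1 : nrm true (-1) != 0.
Proof.
apply/eqP => /dvdz_mod0P; rewrite rpredN dvdz1 /= => /eqP Hk.
by move: hk; rewrite Hk.
Qed.

Definition headA (e : int) (s : nf) := exists i r, s = (false, i) :: r /\ 0 < i * e.

Definition Inv (l : letter bool) (s : nf) :=
  let e := if l.2 then -1 else 1 in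
  if l.1 then exists r, s = (true, 1) :: r /\ headA e r else headA e s.

Definition Fl (l : letter bool) (s : nf) : nf :=
  match l with
  | (false, false) => mA 1 s
  | (false, true) => mA (-1) s
  | (true, b) => mC 1 (mA (if b then -1 else 1) (mC (-1) s))
  end.

Lemma LA e s : (e = 1 \/ e = -1) -> ~ headA (- e) s -> headA e (mA e s).
Proof.
move=> He Hs; case: s Hs => [|[b i] r] Hs.
  rewrite /= /ins /=; case: He => ->; rewrite /=.
    by exists 1, [::].
  by exists (-1), [::].
case: b Hs => Hs /=.
  rewrite /ins /=; case: He => -> /=.
    by exists 1, ((true, i) :: r).
  by exists (-1), ((true, i) :: r).
have Hi : 0 <= i * e.
  rewrite leNgt; apply/negP => H; apply: Hs; exists i, r; split => //.
  by rewrite mulrN oppr_gt0.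
have He2 : (i + e) * e > 0 by move: Hi; case: He => ->; lia.
have -> : (i + e == 0) = false by apply/eqP => H; move: He2; rewrite H mul0r ltxx.
by exists (i + e), r.
Qed.

Lemma P1 e s : wf s -> ~ (exists r, s = (true, 1) :: r /\ headA (- e) r) ->
  ~ headA (- e) (mC (-1) s).
Proof.
move=> Hw Hs.
have Hins : forall t, ~ headA (- e) (ins true (-1) t).
  by move=> t; rewrite /ins (negbTE nrmN1) => -[i [r [] ]].
case: s Hw Hs => [|[b j] r] Hw Hs /=; first exact: Hins.
case: b Hw Hs => Hw Hs /=; last exact: Hins.
case/and4P: Hw => Hn Hj Hr Hh.
have Hk0 : k%:Z != 0 by case: (k) hk.
have Hj0 : 0 <= j by rewrite -(eqP Hn) modz_ge0.
have Hjk : j < k%:Z by rewrite -(eqP Hn) ltz_pmod // ltz_nat; case: (k) hk.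
rewrite modz_small; last by apply/andP; split; lia.
case: eqP => [H1|H1]; last by move=> [i [r' []]].
have Ej : j = 1 by lia.
by move=> Hr'; apply: Hs; exists r; subst j.
Qed.

Lemma step l s : wf s -> ~ Inv (linv l) s -> Inv l (Fl l s).
Proof.
move=> Hw; case: l => [[] b] /= Hs.
- set e := (if b then -1 else 1) : int.
  have He : e = 1 \/ e = -1 by rewrite /e; case: (b); [right|left].
  have {}Hs : ~ (exists r, s = (true, 1) :: r /\ headA (- e) r).
    by move: Hs; rewrite /Inv /linv /e /=; case: (b) => /= H; [rewrite opprK|]; exact: H.
  have := LA _ _ He (P1 _ _ Hw Hs) => -[i [r [Er Hi]]].
  exists ((false, i) :: r); split; last by exists i, r.
  rewrite Er /= /ins nrm1 /=.
  by [].
- case: b Hs => Hs /=.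
    by apply: (LA (-1)); [right|].
  by apply: (LA 1); [left|].
Qed.


Lemma Inv_uniq l1 l2 s : Inv l1 s -> Inv l2 s -> l1 = l2.
Proof.
case: l1 => [[] []]; case: l2 => [[] []] //= H1 H2; exfalso;
move: H1 H2; rewrite /Inv /headA /= => H1 H2;
repeat match goal with
  | H : exists _, _ |- _ => destruct H
  | H : _ /\ _ |- _ => destruct H end;
subst;
repeat match goal with H : (_ :: _) = (_ :: _) |- _ => injection H; clear H; intros; subst end;
try discriminate; lia.
Qed.

Definition xw (j : bool) : word bool :=
  if j then [:: ga; gb; ga; (true, true); (false, true)] else [:: ga].
Definition xl (l : letter bool) : word bool :=
  if l.2 then winv (xw l.1) else xw l.1.

Lemma act_xl l s : wf s -> act (xl l) s = Fl l s.
Proof.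
move=> Hs; case: l => [[] []] /=; rewrite /xl /xw /winv /= /ga /gb /linv /=.
- by rewrite (mulgK false 1) ?wf_mulg // (mulgK false 1) ?wf_mulg.
- by rewrite (mulgK false 1) ?wf_mulg // (mulgK false 1) ?wf_mulg.
- by [].
- by [].
Qed.

Lemma Inv_ne l : ~ Inv l [::].
Proof. by case: l => [[] []] /= => -[x [y []]]. Qed.

Lemma wf_Fl l s : wf s -> wf (Fl l s).
Proof. by case: l => [[] []] /= H; rewrite !wf_mulg. Qed.

Lemma wsubst_cons l w : wsubst xw (l :: w) = xl l ++ wsubst xw w.
Proof. by []. Qed.

Lemma main_ind w l : reduced (l :: w) ->
  wf (act (wsubst xw (l :: w)) [::]) /\ Inv l (act (wsubst xw (l :: w)) [::]).
Proof.
elim: w l => [|l' w IH] l.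
  move=> _; rewrite wsubst_cons act_cat act_xl //; split.
    by apply: wf_Fl.
  by apply: step => //; apply: Inv_ne.
move=> [Hr Hred].
have [Hw HI] := IH l' Hred.
rewrite wsubst_cons act_cat act_xl //; split; first by apply: wf_Fl.
apply: step => // HI'.
have E := Inv_uniq _ _ _ HI HI'; apply: Hr; rewrite E /linv /= negbK; split => //.
Qed.

End Act.

Theorem mainTheorem7 (n m : int) :
  2 <= `|gcdz n m| -> big_presented [:: relator_nm n m].
Proof.
move=> H.
pose k := gcdn `|n|%N `|m|%N.
have Hg : gcdz n m = k%:Z by [].
have hk : (1 < k)%N.
  by move: H; rewrite Hg; lia.
have Hn : (k%:Z %| n)%Z by rewrite -Hg dvdz_gcdl.
have Hm : (k%:Z %| m)%Z by rewrite -Hg dvdz_gcdr.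
exists bool, xw, false, true; split; first by [].
move=> w Hne Hred Hp.
case: w Hne Hred Hp => [//|l w] _ Hred Hp.
have [_ HI] := main_ind _ hk _ _ Hred.
have E := pres_act _ _ _ _ _ Hn Hm Hp [::] (erefl true).
move: HI; rewrite E.
exact: (Inv_ne _).
Qed.
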